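(* In the team production setting with $f$ strictly concave, differentiable, and homogeneous of degree $k\in(0,1)$ and costs $c_{A_i}(a_{A_i})=a_{A_i}$, $$\frac{V^*_{\mathsf{LIN}}}{V^*_{\mathsf{FB}}}\ge\Big(\frac kn\Big)^{\frac k{1-k}}.$$
   Context: Team production: $n$ agents choose efforts $a_{A_i}\ge0$; output has mean $f(\boldsymbol a)$. A linear contract profile $\boldsymbol\phi$ pays agent $i$ the amount $\phi_{A_i}x$; for $\boldsymbol\phi>0$ the induced equilibrium is $\boldsymbol a(\boldsymbol\phi)=\arg\max_{\boldsymbol a}\{f(\boldsymbol a)-\sum_ia_{A_i}/\phi_{A_i}\}$. Let $\Delta=\{\boldsymbol\phi\ge0:\sum_i\phi_{A_i}=1\}$. First-best gross output subject to budget balance: $V^*_{\mathsf{FB}}=\max\{f(\boldsymbol a):\boldsymbol a\ge0,\ f(\boldsymbol a)=\sum_ia_{A_i}\}$. Second-best with linear contracts: $V^*_{\mathsf{LIN}}=\sup_{\boldsymbol\phi\in\Delta,\boldsymbol\phi>0}f(\boldsymbol a(\boldsymbol\phi))$. Homogeneous of degree $k$: $f(\lambda\boldsymbol a)=\lambda^kf(\boldsymbol a)$ for $\lambda>0$. *)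

(* Defs.v *)
From HB Require Import structures.
From mathcomp Require Import all_boot all_order all_algebra.
From mathcomp Require Import all_classical all_reals all_analysis.
Set Implicit Arguments. Unset Strict Implicit. Unset Printing Implicit Defensive.
Import Order.TTheory GRing.Theory Num.Theory.
Import numFieldNormedType.Exports.
Local Open Scope classical_set_scope.
Local Open Scope ring_scope.

Section TeamProduction.
Variables (R : realType) (n : nat).
Implicit Types (a b phi : 'rV[R]_n) (f : 'rV[R]_n -> R).

Definition nonneg a : Prop := forall i, 0 <= a ord0 i.
Definition posv a : Prop := forall i, 0 < a ord0 i.

Definition simplex phi : Prop := nonneg phi /\ \sum_(i < n) phi ord0 i = 1.

Definition strictly_concave_on_orthant f : Prop :=
  forall a b (t : R), nonneg a -> nonneg b -> a != b -> 0 < t < 1 ->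
    t * f a + (1 - t) * f b < f (t *: a + (1 - t) *: b).

Definition homogeneous_deg f (k : R) : Prop :=
  forall (lam : R) a, 0 < lam -> nonneg a -> f (lam *: a) = lam `^ k * f a.

Definition agents_obj f phi a : R :=
  f a - \sum_(i < n) a ord0 i / phi ord0 i.

Definition induced_eq f phi a : Prop :=
  nonneg a /\ forall b, nonneg b -> agents_obj f phi b <= agents_obj f phi a.

(* first best gross output subject to budget balance *)
Definition V_FB f : \bar R :=
  ereal_sup [set (f a)%:E | a in [set a | nonneg a /\ f a = \sum_(i < n) a ord0 i]].

Definition V_LIN f : \bar R :=
  ereal_sup [set (f a)%:E | a in
    [set a | exists phi, [/\ simplex phi, posv phi & induced_eq f phi a]]].

End TeamProduction.

(* Main.v *)
Require Import Defs.
From HB Require Import structures.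
From mathcomp Require Import all_boot all_order all_algebra.
From mathcomp Require Import all_classical all_reals all_analysis.
From mathcomp Require Import ring lra.
Import Order.TTheory GRing.Theory Num.Theory.
Import numFieldNormedType.Exports.
Local Open Scope classical_set_scope.
Local Open Scope ring_scope.
Section S.
Variables (R : realType).
Lemma amgm (k l : R) : 0 < k < 1 -> 0 < l -> l `^ (1-k) <= (1-k) * l + k.
Proof.
move=> /andP[k0 k1] l0.
set A := (1-k) * l + k.
have A0 : 0 < A by rewrite /A; nra.
have h1 := expR_ge1Dx (ln (l/A)).
have h2 := expR_ge1Dx (ln (A^-1)).
rewrite lnK ?posrE ?divr_gt0 // in h1.
rewrite lnK ?posrE ?invr_gt0 // in h2.
rewrite ln_div ?posrE // in h1.
rewrite lnV ?posrE // in h2.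
have e : (1-k) * (l/A) + k * A^-1 = 1.
  rewrite /A; field; rewrite /A; apply/lt0r_neq0; nra.
have h3 : (1-k) * ln l <= ln A.
  have : (1 - k) * (1 + (ln l - ln A)) + k * (1 + - ln A) <= (1-k) * (l/A) + k * A^-1.
    apply: lerD; apply: ler_wpM2l => //; lra.
  rewrite e; nra.
rewrite /powR gt_eqF //.
rewrite -[X in _ <= X](@lnK _ A) ?posrE //.
by rewrite ler_expR.
Qed.
Lemma step (k l fa T : R) : 0 < k < 1 -> 1 < l -> 0 < fa ->
  l`^k * fa - l * T <= fa - T -> k * fa <= l `^ (1-k) * T.
Proof.
move=> /andP[k0 k1] l1 fa0 H.
have l0 : 0 < l by lra.
set p := l `^ k. set r := l `^ (1-k).
have pr : p * r = l.
  rewrite /p /r -powRD; last by rewrite addrC subrK oner_eq0.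
  by rewrite addrC subrK powRr1 // ltW.
have p0 : 0 < p by rewrite powR_gt0.
have r0 : 0 < r by rewrite powR_gt0.
have am : l `^ (1-k) <= (1-k) * l + k by apply: amgm => //; rewrite k0 k1.
rewrite -/r in am.
have h1 : l <= p * ((1-k) * l + k) by rewrite -{1}pr; apply: ler_wpM2l; lra.
have h2 : k * p * (l - 1) <= l * (p - 1) by nra.
have h3 : k * p * (l - 1) * fa <= l * (l - 1) * T.
  have : k * p * (l - 1) * fa <= l * (p - 1) * fa by apply: ler_wpM2r; lra.
  move/le_trans; apply.
  have : (p - 1) * fa <= (l - 1) * T.
    rewrite !mulrBl !mul1r. move: H. rewrite -/p. idtac. lra.
  move=> h; rewrite -mulrA -[X in _ <= X]mulrA; apply: ler_wpM2l; lra.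
have h4 : k * p * fa <= l * T.
  rewrite -(@ler_pM2r _ (l - 1)); last lra.
  by move: h3; rewrite -!mulrA [(l-1) * _]mulrC [(l - 1) * T]mulrC.
by rewrite -(@ler_pM2l _ p) // [X in _ <= X]mulrA pr mulrCA mulrA.
Qed.
Lemma key (k fa T : R) : 0 < k < 1 -> 0 <= T ->
  (forall l, 1 < l -> l`^k * fa - l * T <= fa - T) -> k * fa <= T.
Proof.
move=> /andP[k0 k1] T0 H.
have [fa0|fa0] := leP fa 0; first by nra.
have [Tz|Tpos] := eqVneq T 0.
  rewrite Tz in H *.
  have := @step k 2 fa 0 _ _ fa0 (H 2 ltac:(lra)).
  rewrite mulr0; apply; first by rewrite k0 k1. lra.
have {}Tpos : 0 < T by rewrite lt_neqAle eq_sym Tpos T0.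
rewrite leNgt; apply/negP => lt.
set m := k * fa / T.
have m1 : 1 < m by rewrite /m ltr_pdivlMr // mul1r.
set x := (1 + m) / 2.
have x1 : 1 < x by rewrite /x; lra.
set l := x `^ (1 - k)^-1.
have lk : l `^ (1 - k) = x.
  by rewrite /l -powRrM mulVf ?powRr1 //; lra.
have l1 : 1 < l.
  rewrite /l /powR gt_eqF; last lra.
  rewrite expR_gt1 mulr_gt0 // ?invr_gt0 ?subr_gt0 // ln_gt0 //.
have := @step k l fa T _ l1 fa0 (H l l1).
rewrite lk; move/(_ ltac:(by rewrite k0 k1)).
have : x * T < k * fa.
  rewrite /x -[X in _ < X](@divfK _ T) ?gt_eqF // -/m.
  rewrite ltr_pM2r //; lra.
lra.
Qed.
Variable n : nat.
Lemma sum_cont (s : seq 'I_n) : continuous (fun a : 'rV[R]_n => \sum_(i <- s) a ord0 i).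
Proof.
elim: s => [|j s IH].
  under eq_fun do rewrite big_nil. exact: cst_continuous.
under eq_fun do rewrite big_cons.
move=> x; apply: continuousD; last exact: IH.
exact: coord_continuous.
Qed.
Definition box (M : R) := [set v : 'rV[R]_n | forall i, `[0, M]%classic (v ord0 i)].
Lemma boxP M v : box M v <-> forall i, 0 <= v ord0 i <= M.
Proof.
split => H i; have := H i; rewrite /= ?in_itv //=.
Qed.
Lemma box_max (M : R) (g : 'rV[R]_n -> R) : 0 <= M -> {within box M, continuous g} ->
  exists2 c, box M c & forall t, box M t -> g t <= g c.
Proof.
move=> M0 gc.
have ne : box M !=set0 by exists 0; apply/boxP => i; rewrite mxE lexx M0.
have cp : compact (box M) := @rV_compact _ n (fun=> `[0, M]%classic) (fun=> @segment_compact _ 0 M).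
have [c cA H] := @compact_EVT_max _ _ g (box M) ne cp gc.
exists c; first by move: cA; rewrite inE.
by move=> t tA; apply: H; rewrite inE.
Qed.
Lemma sumZ (lam : R) (a : 'rV[R]_n) :
  \sum_(i < n) (lam *: a) ord0 i = lam * \sum_(i < n) a ord0 i.
Proof. by rewrite mulr_sumr; apply: eq_bigr => i _; rewrite mxE. Qed.
Lemma le_sum (a : 'rV[R]_n) i : nonneg a -> a ord0 i <= \sum_(j < n) a ord0 j.
Proof.
move=> a0; rewrite (bigD1 i) //= lerDl; apply: sumr_ge0 => j _; exact: a0.
Qed.
Lemma nonnegZ (lam : R) (a : 'rV[R]_n) : 0 <= lam -> nonneg a -> nonneg (lam *: a).
Proof. by move=> l0 a0 i; rewrite mxE mulr_ge0. Qed.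
End S.
Arguments box {R n}. Arguments boxP {R n M v}. Arguments box_max {R n M g}.
Arguments le_sum {R n a}. Arguments sum_cont {R n}. Arguments nonnegZ {R n lam a}. Arguments sumZ {R n}.
Import numFieldNormedType.Exports.
Local Open Scope classical_set_scope.

Theorem mainTheorem16 (R : realType) (n : nat) (f : 'rV[R]_n -> R) (k : R) :
  (0 < n)%N ->
  0 < k < 1 ->
  strictly_concave_on_orthant f ->
  {within [set a | nonneg a], continuous f} ->
  (forall a : 'rV[R]_n, posv a -> differentiable f a) ->
  homogeneous_deg f k ->
  (((k / n%:R) `^ (k / (1 - k)))%:E * V_FB f <= V_LIN f)%E.
Proof.
move=> n0 k01 _ fcont _ hom.
have /andP[k0 k1] := k01.
set N : R := n%:R.
have N1 : 1 <= N by rewrite /N ler1n.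
have N0 : 0 < N by lra.
pose phi0 : 'rV[R]_n := const_mx N^-1.
pose S (a : 'rV[R]_n) := \sum_(i < n) a ord0 i.
pose h a := f a - N * S a.
have objE a : agents_obj f phi0 a = h a.
  rewrite /agents_obj /h /S; congr (_ - _); rewrite mulr_sumr.
  by apply: eq_bigr => i _; rewrite mxE invrK mulrC.
have f0 : f 0 = 0.
  have := hom 2 0 ltac:(lra) (fun i => ltac:(by rewrite mxE)).
  rewrite scaler0 => e.
  have : 1 < 2 `^ k :> R.
    by rewrite /powR gt_eqF ?expR_gt1 ?mulr_gt0 ?ln_gt0 //; lra.
  move=> h2; apply/eqP; rewrite -(@mulrI_eq0 _ (2 `^ k - 1)).
    by rewrite mulrBl mul1r -e subrr.
  by apply/lregP; lra.
have boxnn (M : R) (v : 'rV[R]_n) : box M v -> nonneg v by move/boxP => H i; case/andP: (H i).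
have Scont : continuous S by apply: sum_cont.
have fcontM M : {within box M, continuous f}.
  by apply: continuous_subspaceW fcont => v /boxnn.
have hcontM M : {within box M, continuous h}.
  move=> x; apply: (@continuousB _ _ (subspace (box M)) f (fun a => N * S a)); first exact: fcontM.
  apply: continuousM; first exact: cst_continuous.
  exact: (continuous_subspaceT Scont).
have [c1 c1box c1max] := box_max (@ler01 R) (fcontM 1).
set B := f c1.
have B0 : 0 <= B.
  rewrite -f0; apply: c1max; apply/boxP => i; rewrite mxE lexx ler01 //.
set M := (1 + B) `^ (1 - k)^-1.
have M0 : 0 <= M by apply: powR_ge0.
have [c cbox cmax] := box_max M0 (hcontM M).
have h00 : h 0 = 0 by rewrite /h f0 /S big1 ?mulr0 ?subr0 // => i _; rewrite mxE.
have hc0 : 0 <= h c by rewrite -h00; apply: cmax; apply/boxP => i; rewrite mxE lexx M0.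
have cnn := boxnn _ _ cbox.
have ceq : forall b, nonneg b -> h b <= h c.
  move=> b b0; rewrite leNgt; apply/negP => hlt.
  suff : box M b by move/cmax; rewrite leNgt hlt.
  apply/boxP => i; rewrite b0 /= leNgt; apply/negP => bi.
  have si := le_sum i b0.
  set s := S b.
  have s0 : 0 < s by rewrite /s /S; lra.
  pose d := s^-1 *: b.
  have bd : b = s *: d by rewrite /d scalerA divff ?gt_eqF // scale1r.
  have dbox : box 1 d.
    apply/boxP => j; rewrite mxE; apply/andP; split.
      by rewrite mulr_ge0 ?invr_ge0 ?b0 // ltW.
    by rewrite mulrC ler_pdivrMr // mul1r; apply: le_sum.
  have fd : f d <= B by apply: c1max.
  have fb : f b = s `^ k * f d by rewrite {1}bd (hom s d s0 (boxnn _ _ dbox)).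
  have sM : M `^ (1-k) <= s `^ (1 - k).
    apply: ge0_ler_powR; rewrite ?nnegrE ?subr_ge0 ?(ltW k1) ?(ltW s0) //.
    exact: le_trans (ltW bi) si.
  have k1' : 0 < 1 - k by rewrite subr_gt0.
  have MB : M `^ (1-k) = 1 + B.
    by rewrite /M -powRrM mulVf ?powRr1 ?(gt_eqF k1') // addr_ge0.
  have ss : s `^ k * s `^ (1 - k) = s.
    rewrite -powRD; last by rewrite addrC subrK oner_eq0.
    by rewrite addrC subrK powRr1 // ltW.
  have sk0 : 0 < s `^ k by rewrite powR_gt0.
  have hsB : s `^ k * B <= s.
    rewrite -[X in _ <= X]ss; apply: ler_wpM2l; first exact: ltW.
    by apply: le_trans sM; rewrite MB lerDr ler01.
  have hb : h b <= 0.
    have e1 : s `^ k * f d <= s := le_trans (ler_wpM2l (ltW sk0) fd) hsB.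
    have e2 : s <= N * s by rewrite ler_peMl // ltW.
    rewrite /h fb -/s subr_le0; exact: le_trans e1 e2.
  by move: (le_lt_trans hc0 (lt_le_trans hlt hb)); rewrite ltxx.
have ceqI : induced_eq f phi0 c.
  split; first exact: cnn.
  by move=> b b0; rewrite !objE; apply: ceq b b0.
have phis : simplex phi0.
  split; first by move=> i; rewrite mxE invr_ge0 ltW.
  under eq_bigr do rewrite mxE.
  by rewrite sumr_const card_ord -mulr_natr mulVf // gt_eqF.
have phip : posv phi0 by move=> i; rewrite mxE invr_gt0.
have hcLIN : ((f c)%:E <= V_LIN f)%E.
  by apply: ereal_sup_ubound; exists c => //; exists phi0; split.
have Sge0 (a : 'rV[R]_n) : nonneg a -> 0 <= S a.
  by move=> a0; apply: sumr_ge0 => i _; exact: a0.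
have kN : 0 < k / N by rewrite divr_gt0.
set t0 := (k / N) `^ (1 - k)^-1.
set cst := (k / N) `^ (k / (1 - k)).
have t0k : t0 `^ k = cst by rewrite /t0 /cst -powRrM [(1 - k)^-1 * k]mulrC.
have t00 : 0 < t0 by rewrite powR_gt0.
have cst0 : 0 < cst by rewrite powR_gt0.
have t01 : t0 `^ (1 - k) = k / N.
  by rewrite /t0 -powRrM mulVf ?powRr1 ?(ltW kN) // gt_eqF // subr_gt0.
have Nt0 : N * t0 = k * cst.
  have : t0 = cst * (k / N).
    rewrite -t0k -t01 -powRD; last by rewrite addrC subrK oner_eq0.
    by rewrite addrC subrK powRr1 // ltW.
  by move=> ->; field; rewrite gt_eqF.
have Hkey : k * f c <= N * S c.
  apply: key => //; first exact: mulr_ge0 (ltW N0) (Sge0 c cnn).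
  move=> l l1.
  have := ceq (l *: c) (nonnegZ (ltW (lt_trans ltr01 l1)) cnn).
  rewrite /h (hom l c (lt_trans ltr01 l1) cnn) /S sumZ -/(S c).
  by rewrite mulrCA.
have main (a : 'rV[R]_n) : nonneg a -> f a = S a -> cst * f a <= f c.
  move=> a0 fa.
  have := ceq (t0 *: a) (nonnegZ (ltW t00) a0).
  rewrite /h (hom t0 a t00 a0) /S sumZ -/(S a) -/(S c) t0k -fa mulrA Nt0.
  move=> H.
  have : (1 - k) * (cst * f a) <= (1 - k) * f c by lra.
  by rewrite ler_pM2l // subr_gt0.
have VFB : (V_FB f <= (f c / cst)%:E)%E.
  apply/ereal_supP => y [a [a0 fa] <-].
  by rewrite lee_fin ler_pdivlMr // mulrC main.
have VFB0 : (0 <= V_FB f)%E.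
  apply: ereal_sup_ubound; exists 0; last by rewrite f0.
  by split; [move=> i; rewrite mxE | rewrite f0 /S big1 // => i _; rewrite mxE].
move: VFB VFB0; case: (V_FB f) => [r| |] // rle _.
apply: le_trans hcLIN; rewrite -EFinM lee_fin.
by rewrite mulrC -ler_pdivlMr //; rewrite lee_fin in rle.
Qed.
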